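(* Let $\Gamma$ be a typing context and $A$ a type, both closed (containing no atomic types). If there is a term $t$ with $\Gamma\vdash t:A$, then either there is a closed term $\emptyset\vdash u:A$, or there is a term $\Gamma\vdash w:0$.
   Context: Types: $A,B ::= X \mid A\to B \mid A_1\times A_2 \mid 1 \mid A_1+A_2 \mid 0$ ($X$ atomic); a closed type contains no atomic type, and a closed context contains only closed types. Terms: $x \mid \lambda x.t \mid t\,u \mid (t_1,t_2) \mid \pi_i t \mid () \mid \sigma_i t \mid \mathtt{match}\ t\ \mathtt{with}\ (\sigma_1 x_1\to u_1 \mid \sigma_2 x_2\to u_2) \mid \mathtt{absurd}(t)$, with the standard simple typing rules of the simply-typed $\lambda$-calculus with functions, products, unit, binary sums and the empty type ($\mathtt{absurd}(t):A$ for any $A$ when $t:0$). *)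

(* Defs.v *)
(* Curry-style (unannotated) terms,
   variables as de Bruijn indices; a context is a list of types, variable
   n denoting the n-th entry (most recently bound first). *)
From Stdlib Require Import List.
Import ListNotations.

Inductive ty : Type :=
| TAtom : nat -> ty
| TArr  : ty -> ty -> ty
| TProd : ty -> ty -> ty
| TUnit : ty
| TSum  : ty -> ty -> ty
| TZero : ty.

Inductive tm : Type :=
| Var   : nat -> tm
| Lam   : tm -> tm
| App   : tm -> tm -> tm
| Pair  : tm -> tm -> tm
| Proj1 : tm -> tm
| Proj2 : tm -> tm
| Unit  : tm
| Inj1  : tm -> tm
| Inj2  : tm -> tm
| Match : tm -> tm -> tm -> tm           (* match t with s1 x1 -> u1 | s2 x2 -> u2 ; x_i bound in u_i *)
| Absurd : tm -> tm.

Definition ctx := list ty.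

Inductive typed : ctx -> tm -> ty -> Prop :=
| T_Var : forall G n A, nth_error G n = Some A -> typed G (Var n) A
| T_Lam : forall G t A B, typed (A :: G) t B -> typed G (Lam t) (TArr A B)
| T_App : forall G t u A B, typed G t (TArr A B) -> typed G u A -> typed G (App t u) B
| T_Pair : forall G t1 t2 A1 A2, typed G t1 A1 -> typed G t2 A2 ->
    typed G (Pair t1 t2) (TProd A1 A2)
| T_Proj1 : forall G t A1 A2, typed G t (TProd A1 A2) -> typed G (Proj1 t) A1
| T_Proj2 : forall G t A1 A2, typed G t (TProd A1 A2) -> typed G (Proj2 t) A2
| T_Unit : forall G, typed G Unit TUnit
| T_Inj1 : forall G t A1 A2, typed G t A1 -> typed G (Inj1 t) (TSum A1 A2)
| T_Inj2 : forall G t A1 A2, typed G t A2 -> typed G (Inj2 t) (TSum A1 A2)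
| T_Match : forall G t u1 u2 A1 A2 C, typed G t (TSum A1 A2) ->
    typed (A1 :: G) u1 C -> typed (A2 :: G) u2 C -> typed G (Match t u1 u2) C
| T_Absurd : forall G t A, typed G t TZero -> typed G (Absurd t) A.

Fixpoint closed_ty (A : ty) : Prop :=
  match A with
  | TAtom _ => False
  | TArr A B | TProd A B | TSum A B => closed_ty A /\ closed_ty B
  | TUnit | TZero => True
  end.

Definition closed_ctx (G : ctx) : Prop := Forall closed_ty G.

(* Main.v *)
Require Import Defs.
From Stdlib Require Import List Bool Lia.
Import ListNotations.

Fixpoint v (A : ty) : bool :=
  match A with
  | TAtom _ => true
  | TArr A B => negb (v A) || v B
  | TProd A B => v A && v B
  | TUnit => true
  | TSum A B => v A || v B
  | TZero => false
  end.

Lemma weaken : forall G t A, typed G t A -> forall D, typed (G ++ D) t A.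
Proof.
  induction 1; intros D; try (econstructor; eauto; fail).
  - constructor. rewrite nth_error_app1; auto.
    apply nth_error_Some. congruence.
Qed.

Lemma weaken0 : forall t A D, typed [] t A -> typed D t A.
Proof. intros. apply (weaken _ _ _ H D). Qed.

Lemma sound : forall G t A, typed G t A -> Forall (fun B => v B = true) G -> v A = true.
Proof.
  induction 1; intros HG; simpl in *.
  - eapply Forall_forall in HG; eauto. eapply nth_error_In; eauto.
  - destruct (v A) eqn:E; simpl; auto.
  - specialize (IHtyped1 HG); specialize (IHtyped2 HG). rewrite IHtyped2 in IHtyped1. exact IHtyped1.
  - rewrite IHtyped1, IHtyped2; auto.
  - apply andb_prop in IHtyped; tauto.
  - apply andb_prop in IHtyped; tauto.
  - auto.
  - rewrite IHtyped; auto.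
  - rewrite IHtyped; auto with bool.
  - specialize (IHtyped1 HG). apply orb_prop in IHtyped1 as [Hx|Hx]; auto.
  - specialize (IHtyped HG). discriminate.
Qed.

Lemma construct : forall A, closed_ty A ->
  (v A = true -> exists t, typed [] t A) /\
  (v A = false -> exists t, typed [] t (TArr A TZero)).
Proof.
  induction A; simpl; intros HC.
  - contradiction.
  - destruct HC as [H1 H2]. destruct (IHA1 H1) as [a1 b1]. destruct (IHA2 H2) as [a2 b2].
    split; intros E.
    + destruct (v A2) eqn:E2.
      * destruct (a2 eq_refl) as [t Ht]. exists (Lam t). constructor. apply weaken0; auto.
      * destruct (v A1) eqn:E1; try discriminate.
        destruct (b1 eq_refl) as [r Hr]. exists (Lam (Absurd (App r (Var 0)))).
        constructor. constructor. econstructor. apply weaken0; eauto. constructor; reflexivity.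
    + destruct (v A1) eqn:E1; destruct (v A2) eqn:E2; try discriminate.
      destruct (a1 eq_refl) as [t Ht]. destruct (b2 eq_refl) as [r Hr].
      exists (Lam (App r (App (Var 0) t))). constructor. econstructor. apply weaken0; eauto.
      econstructor. constructor; reflexivity. apply weaken0; eauto.
  - destruct HC as [H1 H2]. destruct (IHA1 H1) as [a1 b1]. destruct (IHA2 H2) as [a2 b2].
    split; intros E.
    + apply andb_prop in E as [E1 E2]. destruct (a1 E1) as [t1 ?]; destruct (a2 E2) as [t2 ?].
      exists (Pair t1 t2). constructor; auto.
    + destruct (v A1) eqn:E1.
      * destruct (b2 E) as [r Hr]. exists (Lam (App r (Proj2 (Var 0)))). constructor.
        econstructor. apply weaken0; eauto. econstructor. constructor; reflexivity.
      * destruct (b1 eq_refl) as [r Hr]. exists (Lam (App r (Proj1 (Var 0)))). constructor.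
        econstructor. apply weaken0; eauto. econstructor. constructor; reflexivity.
  - split; intros; try discriminate. exists Unit; constructor.
  - destruct HC as [H1 H2]. destruct (IHA1 H1) as [a1 b1]. destruct (IHA2 H2) as [a2 b2].
    split; intros E.
    + destruct (v A1) eqn:E1.
      * destruct (a1 eq_refl) as [t ?]. exists (Inj1 t). constructor; auto.
      * destruct (a2 E) as [t ?]. exists (Inj2 t). constructor; auto.
    + destruct (v A1) eqn:E1; destruct (v A2) eqn:E2; try discriminate.
      destruct (b1 eq_refl) as [r1 ?]. destruct (b2 eq_refl) as [r2 ?].
      exists (Lam (Match (Var 0) (App r1 (Var 0)) (App r2 (Var 0)))).
      constructor. econstructor. constructor; reflexivity.
      econstructor. apply weaken0; eauto. constructor; reflexivity.
      econstructor. apply weaken0; eauto. constructor; reflexivity.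
  - split; intros; try discriminate. exists (Lam (Var 0)). constructor. constructor; reflexivity.
Qed.

Theorem mainTheorem8 (G : ctx) (A : ty) :
  closed_ctx G -> closed_ty A ->
  (exists t, typed G t A) ->
  (exists u, typed [] u A) \/ (exists w, typed G w TZero).
Proof.
  intros HG HA [t Ht].
  destruct (Forall_dec (fun B => v B = true) (fun B => bool_dec (v B) true) G) as [Hall|Hn].
  - left. apply (proj1 (construct A HA)). eapply sound; eauto.
  - right. apply Exists_Forall_neg in Hn.
    2:{ intros B. destruct (v B); [left|right]; auto. }
    apply Exists_nth in Hn as [n [d [Hlt Hn]]].
    assert (HB : nth_error G n = Some (nth n G d)) by (apply nth_error_nth'; auto).
    assert (Hc : closed_ty (nth n G d)).
    { unfold closed_ctx in HG. eapply Forall_forall in HG; eauto. apply nth_In; auto. }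
    destruct (proj2 (construct _ Hc)) as [r Hr].
    { destruct (v (nth n G d)); auto. congruence. }
    exists (App r (Var n)). econstructor. apply weaken0; eauto. constructor; auto.
Qed.
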